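(* Let $I,J,t\in\mathbb{N}$ and $f:\{0,1\}^d\to\{0,1\}$ arbitrary, and let $\eta=\Pr_{x,y,z\sim\{0,1\}^d}[T_f(x,y,z)=1]$ for independent uniform $x,y,z$. If $z$ and $x_i^{(\ell)},y_j^{(\ell)}$ for $(i,j,\ell)\in[I]\times[J]\times[t+1]$ are sampled uniformly and independently from $\{0,1\}^d$, then $$\Pr\Big[\bigcap_{i\in[I],\,j\in[J],\,\ell\in[t+1]}\big[T_f(x_i^{(\ell)},y_j^{(\ell)},z)=1\big]\Big]\ge\eta^{IJ(t+1)}.$$
   Context: For $f:\{0,1\}^d\to\{0,1\}$ and $x,y,z\in\{0,1\}^d$, $T_f(x,y,z)=\sum_{\emptyset\neq S\subseteq\{x,y,z\}} f\big(\bigoplus_{u\in S}u\big)\bmod 2$ (the sum of $f$ over $x,y,z,x\oplus y,x\oplus z,y\oplus z,x\oplus y\oplus z$), where $\oplus$ is bitwise XOR. *)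

(* Defs.v *)
From HB Require Import structures.
From mathcomp Require Import all_boot all_order all_algebra.
Set Implicit Arguments. Unset Strict Implicit. Unset Printing Implicit Defensive.
Import Order.TTheory GRing.Theory Num.Theory.

Definition vec (d : nat) := {ffun 'I_d -> bool}.

Definition vxor (d : nat) (u v : vec d) : vec d := [ffun i => u i (+) v i].

Definition Tf (d : nat) (f : vec d -> bool) (x y z : vec d) : nat :=
  (f x + f y + f z + f (vxor x y) + f (vxor x z) + f (vxor y z)
   + f (vxor (vxor x y) z)) %% 2.

Definition Pr (T : finType) (A : pred T) : rat :=
  (#|A|%:R / #|T|%:R)%R.

(* Main.v *)
Require Import Defs.
From HB Require Import structures.
From mathcomp Require Import all_boot all_order all_algebra.
Set Implicit Arguments. Unset Strict Implicit. Unset Printing Implicit Defensive.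
Import Order.TTheory GRing.Theory Num.Theory.
Local Open Scope ring_scope.
From mathcomp Require Import ring.

Definition E (T : finType) (h : T -> rat) : rat := (\sum_x h x) / #|T|%:R.

Lemma E_ge0 (T : finType) (h : T -> rat) : (forall x, 0 <= h x) -> 0 <= E h.
Proof. by move=> H; rewrite /E divr_ge0 // sumr_ge0. Qed.

Lemma E_le (T : finType) (h1 h2 : T -> rat) :
  (forall x, h1 x <= h2 x) -> E h1 <= E h2.
Proof. by move=> H; rewrite /E ler_wpM2r ?invr_ge0 ?ler0n // ler_sum. Qed.

Lemma E_ext (T : finType) (h1 h2 : T -> rat) :
  (forall x, h1 x = h2 x) -> E h1 = E h2.
Proof. by move=> H; rewrite /E; congr (_ / _); apply: eq_bigr. Qed.

Lemma cardN0 (T : finType) (x0 : T) : (#|T|%:R : rat) != 0.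
Proof. rewrite pnatr_eq0 -lt0n; apply/card_gt0P; by exists x0. Qed.

Lemma E_const (T : finType) (x0 : T) c : E (fun _ : T => c) = c.
Proof. by rewrite /E sumr_const -[c *+ _]mulr_natr mulfK // (cardN0 x0). Qed.

Lemma E_pair (T1 T2 : finType) (h : T1 * T2 -> rat) :
  E h = E (fun a => E (fun b => h (a, b))).
Proof.
rewrite /E card_prod natrM invfM -mulr_suml -mulrA [_^-1 * _^-1]mulrC.
congr (_ * _).
rewrite pair_big /=; apply: eq_bigr => -[a b] _ //.
Qed.

Lemma E_exch (T1 T2 : finType) (h : T1 -> T2 -> rat) :
  E (fun a => E (fun b => h a b)) = E (fun b => E (fun a => h a b)).
Proof.
rewrite /E -!mulr_suml -!mulrA [_^-1 * _]mulrC; congr (_ * _).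
exact: exchange_big.
Qed.

Lemma E_ffun (A B : finType) (h : A -> B -> rat) :
  E (fun F : {ffun A -> B} => \prod_a h a (F a)) = \prod_a E (h a).
Proof.
rewrite /E -bigA_distr_bigA big_split /= prodr_const card_ffun natrX exprVn.
by [].
Qed.

Lemma E_bij (T T' : finType) (phi : T' -> T) (h : T -> rat) :
  bijective phi -> E h = E (fun x => h (phi x)).
Proof.
move=> Hb; rewrite /E (bij_eq_card Hb); congr (_ / _).
by rewrite (reindex phi) //; apply: onW_bij.
Qed.

Lemma cheb (T : finType) (h : T -> rat) n : (forall x, 0 <= h x) ->
  E (fun x => h x ^+ n) * E h <= E (fun x => h x ^+ n.+1).
Proof.
move=> H0; rewrite /E.
have key : 0 <= \sum_a \sum_b (h a ^+ n - h b ^+ n) * (h a - h b).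
  apply: sumr_ge0 => a _; apply: sumr_ge0 => b _.
  have [hab|hab] := leP (h a) (h b).
    rewrite -mulrNN !opprB; apply: mulr_ge0; rewrite subr_ge0 //.
    by apply: lerXn2r; rewrite // nnegrE.
  apply: mulr_ge0; rewrite subr_ge0; last exact: ltW.
  by apply: lerXn2r; rewrite ?nnegrE // ltW.
set N : rat := #|T|%:R.
have e : \sum_a \sum_b (h a ^+ n - h b ^+ n) * (h a - h b) =
   (N * \sum_a h a ^+ n.+1 - (\sum_a h a ^+ n) * (\sum_a h a)) *+ 2.
  have e1 : forall a b, (h a ^+ n - h b ^+ n) * (h a - h b) =
     (h a ^+ n.+1 + h b ^+ n.+1) - (h a ^+ n * h b + h b ^+ n * h a).
    by move=> a b; rewrite !exprSr; ring.
  under eq_bigr => a _ do under eq_bigr => b _ do rewrite e1.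
  under eq_bigr => a _ do rewrite sumrB big_split /= sumr_const big_split /=.
  rewrite sumrB !big_split /=.
  have s1 : \sum_i \sum_i0 h i ^+ n * h i0 = (\sum_a h a ^+ n) * \sum_a h a.
    by rewrite big_distrl /=; apply: eq_bigr => i _; rewrite big_distrr.
  have s2 : \sum_i \sum_i0 h i0 ^+ n * h i = (\sum_a h a ^+ n) * \sum_a h a.
    by rewrite exchange_big.
  have s3 : \sum_i h i ^+ n.+1 *+ #|T| = (\sum_a h a ^+ n.+1) * N.
    by rewrite mulr_suml; apply: eq_bigr => i _; rewrite mulr_natr.
  rewrite s1 s2 sumr_const s3.
  move: (\sum_i h i ^+ n.+1) (\sum_a h a ^+ n) (\sum_a h a) => S P Q.
  rewrite (_ : S *+ #|xpredT| = S * N); last by rewrite mulr_natr.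
  rewrite -[_ *+ 2]mulr_natr.
  ring.
move: key; rewrite e pmulrn_lge0 // subr_ge0.
move: (\sum_x h x ^+ n.+1) (\sum_x h x ^+ n) (\sum_x h x) => S P Q HPQ.
have [->|N0] := eqVneq N 0; first by rewrite !invr0 !mulr0.
rewrite mulrACA -invfM.
rewrite (_ : S / N = N * S / (N * N)); last by field.
by rewrite ler_wpM2r // invr_ge0 mulr_ge0 // /N ler0n.
Qed.

Lemma jensen (T : finType) (x0 : T) (h : T -> rat) n : (forall x, 0 <= h x) ->
  E h ^+ n <= E (fun x => h x ^+ n).
Proof.
move=> H0; elim: n => [|n IH].
  by rewrite expr0 (E_ext (h2 := fun _ => 1)) ?(E_const x0) // => x; rewrite expr0.
rewrite exprSr; apply: le_trans (cheb n H0).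
by rewrite ler_wpM2r // E_ge0.
Qed.

Definition unc (A L V : finType) (X : {ffun L -> {ffun A -> V}}) : {ffun A * L -> V} :=
  [ffun p => X p.2 p.1].

Lemma unc_bij (A L V : finType) : bijective (@unc A L V).
Proof.
exists (fun X : {ffun A * L -> V} =>
  ([ffun l => [ffun a => X (a, l)] : {ffun A -> V}] : {ffun L -> {ffun A -> V}})).
  by move=> X; apply/ffunP => l; apply/ffunP => a; rewrite !ffunE.
by move=> X; apply/ffunP => -[a l]; rewrite !ffunE.
Qed.

Lemma E_prod_const (T A : finType) (h : T -> rat) :
  E (fun F : {ffun A -> T} => \prod_a h (F a)) = E h ^+ #|A|.
Proof. by rewrite (E_ffun (fun _ => h)) prodr_const. Qed.

Lemma pointwise (V : finType) (v0 : V) (I J L : nat) (G : V -> V -> rat) :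
  (forall x y, 0 <= G x y) ->
  E (fun x => E (fun y => G x y)) ^+ (I * J * L) <=
  E (fun X : {ffun 'I_I * 'I_L -> V} => E (fun Y : {ffun 'I_J * 'I_L -> V} =>
     \prod_(i < I) \prod_(j < J) \prod_(l < L) G (X (i, l)) (Y (j, l)))).
Proof.
move=> G0.
pose K (xs : {ffun 'I_I -> V}) (ys : {ffun 'I_J -> V}) :=
  \prod_(i < I) \prod_(j < J) G (xs i) (ys j).
have HK : forall X' Y', \prod_(i < I) \prod_(j < J) \prod_(l < L)
    G (unc X' (i, l)) (unc Y' (j, l)) = \prod_(l < L) K (X' l) (Y' l).
  move=> X' Y'.
  under eq_bigr => i _ do rewrite exchange_big /=.
  rewrite exchange_big /=; apply: eq_bigr => l _; apply: eq_bigr => i _.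
  by apply: eq_bigr => j _; rewrite !ffunE.
have e1 : E (fun X : {ffun 'I_I * 'I_L -> V} => E (fun Y : {ffun 'I_J * 'I_L -> V} =>
     \prod_(i < I) \prod_(j < J) \prod_(l < L) G (X (i, l)) (Y (j, l)))) =
   E (fun X' : {ffun 'I_L -> {ffun 'I_I -> V}} => E (fun Y' : {ffun 'I_L -> {ffun 'I_J -> V}} =>
     \prod_(l < L) K (X' l) (Y' l))).
  rewrite (E_bij _ (@unc_bij 'I_I 'I_L V)); apply: E_ext => X'.
  rewrite (E_bij _ (@unc_bij 'I_J 'I_L V)); apply: E_ext => Y'.
  exact: HK.
rewrite e1; clear e1.
have e2 : E (fun X' : {ffun 'I_L -> {ffun 'I_I -> V}} => E (fun Y' : {ffun 'I_L -> {ffun 'I_J -> V}} =>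
     \prod_(l < L) K (X' l) (Y' l))) = E (fun xs => E (fun ys => K xs ys)) ^+ L.
  transitivity (E (fun X' : {ffun 'I_L -> {ffun 'I_I -> V}} =>
      \prod_(l < L) E (fun ys => K (X' l) ys))).
    by apply: E_ext => X'; rewrite (E_ffun (fun l ys => K (X' l) ys)).
  by rewrite (@E_prod_const _ 'I_L (fun xs => E (fun ys => K xs ys))) card_ord.
rewrite e2; clear e2.
have K0 : forall xs ys, 0 <= K xs ys.
  by move=> xs ys; apply: prodr_ge0 => i _; apply: prodr_ge0.
set p := E (fun x => E (fun y => G x y)).
have p0 : 0 <= p by apply: E_ge0 => x; apply: E_ge0.
rewrite exprM; apply: lerXn2r.
- by rewrite nnegrE exprn_ge0.
- by rewrite nnegrE; exact: E_ge0 (fun xs => E_ge0 (K0 xs)).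
pose r (ys : {ffun 'I_J -> V}) := E (fun x => \prod_(j < J) G x (ys j)).
have e3 : E (fun xs => E (fun ys => K xs ys)) = E (fun ys => r ys ^+ I).
  rewrite E_exch; apply: E_ext => ys.
  by rewrite (@E_prod_const _ 'I_I (fun x => \prod_(j < J) G x (ys j))) card_ord.
rewrite e3; clear e3.
have r0 : forall ys, 0 <= r ys.
  by move=> ys; apply: E_ge0 => x; apply: prodr_ge0.
apply: le_trans (jensen [ffun=> v0] _ r0).
rewrite mulnC exprM; apply: lerXn2r.
- by rewrite nnegrE !exprn_ge0.
- by rewrite nnegrE; exact: E_ge0 r0.
have e4 : E r = E (fun x => E (fun y => G x y) ^+ J).
  rewrite /r E_exch; apply: E_ext => x.
  by rewrite (@E_prod_const _ 'I_J (fun y => G x y)) card_ord.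
rewrite e4 /p; apply: (jensen v0) => x; exact: E_ge0.
Qed.


Lemma PrE (T : finType) (P : pred T) : Pr P = E (fun x => (P x)%:R).
Proof.
rewrite /Pr /E; congr (_ / _); rewrite -sum1_card natr_sum big_mkcond /=.
by apply: eq_bigr => x _; rewrite unfold_in; case: (P x).
Qed.

Lemma forall_prod (T : finType) (P : pred T) :
  ([forall x, P x]%:R : rat) = \prod_x (P x)%:R.
Proof.
case: (boolP [forall x, P x]) => [/forallP H|/forallPn [x Hx]].
  by rewrite big1 // => x _; rewrite H.
by rewrite (bigD1 x) //= (negbTE Hx) mul0r.
Qed.

Theorem claim4p4 (d I J t : nat) (f : vec d -> bool) :
  let eta := Pr [pred p : vec d * vec d * vec d | Tf f p.1.1 p.1.2 p.2 == 1%N] in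
  (eta ^+ (I * J * t.+1) <=
   Pr [pred w : vec d * {ffun 'I_I * 'I_t.+1 -> vec d}
                      * {ffun 'I_J * 'I_t.+1 -> vec d} |
       [forall i : 'I_I, forall j : 'I_J, forall l : 'I_t.+1,
          Tf f (w.1.2 (i, l)) (w.2 (j, l)) w.1.1 == 1%N]])%R.
Proof.
cbv zeta.
set eta := Pr [pred p : vec d * vec d * vec d | _].
pose v0 : vec d := [ffun _ => false].
pose g (z x y : vec d) : rat := (Tf f x y z == 1%N)%:R.
have g0 : forall z x y, 0 <= g z x y by move=> *; rewrite ler0n.
have Heta : eta = E (fun z => E (fun x => E (fun y => g z x y))).
  rewrite /eta PrE E_pair E_pair /=.
  transitivity (E (fun x => E (fun z => E (fun y => g z x y)))); last by rewrite E_exch.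
  by apply: E_ext => x; rewrite E_exch.
rewrite Heta.
set R := Pr _.
have -> : R = E (fun z => E (fun X : {ffun 'I_I * 'I_t.+1 -> vec d} =>
     E (fun Y : {ffun 'I_J * 'I_t.+1 -> vec d} =>
     \prod_(i < I) \prod_(j < J) \prod_(l < t.+1) g z (X (i, l)) (Y (j, l))))).
  rewrite /R PrE E_pair E_pair /=.
  apply: E_ext => z; apply: E_ext => X; apply: E_ext => Y.
  rewrite forall_prod; apply: eq_bigr => i _; rewrite forall_prod.
  by apply: eq_bigr => j _; rewrite forall_prod.
apply: le_trans (jensen v0 _ _) _.
  by move=> z; apply: E_ge0 => x; apply: E_ge0.
apply: E_le => z; exact: (pointwise v0).
Qed.
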